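(* Let $D:\mathbb R^2\setminus\{0\}\to\mathbb R$ be nonnegative, bounded and continuously differentiable, and consider $\ddot x+D(x)\dot x=-x/|x|^3$. Let $r_B,T>0$ and let $x_n:[-T,0]\to\mathbb R^2\setminus\{0\}$ be solutions with $r_n(0)=r_B$ and $\dot r_n(0)\to-\infty$, where $r_n=|x_n|$. Then $\dot r_n(t)\to-\infty$ as $n\to+\infty$, uniformly with respect to $t\in[-T,0]$. *)

(* Defs.v *)
From Stdlib Require Export Reals.
From Coquelicot Require Export Coquelicot.
Open Scope R_scope.

Definition norm2 (a b : R) : R := sqrt (a * a + b * b).

Definition C1_punctured (D : R -> R -> R) : Prop :=
  exists Dx Dy : R -> R -> R,
    forall a b : R, (a, b) <> (0, 0) ->
      differentiable_pt_lim D a b (Dx a b) (Dy a b) /\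
      continuity_2d_pt Dx a b /\ continuity_2d_pt Dy a b.

Definition cont_within (T : R) (f : R -> R) (t : R) : Prop :=
  filterlim f (within (fun s => -T <= s <= 0) (locally t)) (locally (f t)).

(* (x1,x2) : [-T,0] -> R^2\{0} is a (C^2) solution of
     x'' + D(x) x' = - x / |x|^3
   with velocity (v1,v2): x, x' continuous on the closed interval [-T,0],
   x' is the derivative of x and the equation holds on (-T,0). *)
Definition is_solution (D : R -> R -> R) (T : R) (x1 x2 v1 v2 : R -> R) : Prop :=
  (forall t, -T <= t <= 0 -> (x1 t, x2 t) <> (0, 0)) /\
  (forall t, -T <= t <= 0 ->
     cont_within T x1 t /\ cont_within T x2 t /\
     cont_within T v1 t /\ cont_within T v2 t) /\
  (forall t, -T < t < 0 ->
     is_derive x1 t (v1 t) /\ is_derive x2 t (v2 t) /\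
     is_derive v1 t (- D (x1 t) (x2 t) * v1 t - x1 t / (norm2 (x1 t) (x2 t)) ^ 3) /\
     is_derive v2 t (- D (x1 t) (x2 t) * v2 t - x2 t / (norm2 (x1 t) (x2 t)) ^ 3)).

(* radial velocity r'(t) = (x . x') / |x|, the derivative of r = |x|
   (at the endpoint t = 0 it is the one-sided derivative / continuous
   extension, since x' is continuous on [-T,0]). *)
Definition rdot (x1 x2 v1 v2 : R -> R) (t : R) : R :=
  (x1 t * v1 t + x2 t * v2 t) / norm2 (x1 t) (x2 t).

(* Main.v *)
Require Import Defs.
From Stdlib Require Import Lra Lia.

Section CW.
Context {T0 : Type} (F : (T0 -> Prop) -> Prop) {FF : Filter F}.
Lemma cw_plus (f g : T0 -> R) a b : filterlim f F (locally a) -> filterlim g F (locally b) ->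
  filterlim (fun t => f t + g t) F (locally (a + b)).
Proof. intros Hf Hg. eapply filterlim_comp_2; [exact Hf|exact Hg|]. exact (filterlim_plus a b). Qed.
Lemma cw_mult (f g : T0 -> R) a b : filterlim f F (locally a) -> filterlim g F (locally b) ->
  filterlim (fun t => f t * g t) F (locally (a * b)).
Proof. intros Hf Hg. eapply filterlim_comp_2; [exact Hf|exact Hg|]. exact (filterlim_mult a b). Qed.
Lemma cw_comp (f : T0 -> R) (h : R -> R) a : filterlim f F (locally a) -> continuous h a ->
  filterlim (fun t => h (f t)) F (locally (h a)).
Proof. intros Hf Hh. eapply filterlim_comp; [exact Hf|exact Hh]. Qed.
End CW.

Lemma is_derive_eq (f : R -> R) x d d' : is_derive f x d -> d = d' -> is_derive f x d'.
Proof. intros H ->; exact H. Qed.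

Definition clamp (a b t : R) := Rmax a (Rmin b t).

Lemma clamp_in a b t : a <= b -> a <= clamp a b t <= b.
Proof. intros; unfold clamp, Rmax, Rmin; repeat destruct Rle_dec; lra. Qed.

Lemma clamp_lip a b t x : a <= b -> Rabs (clamp a b t - clamp a b x) <= Rabs (t - x).
Proof. intros; unfold clamp, Rmax, Rmin; repeat destruct Rle_dec;
  unfold Rabs; repeat destruct Rcase_abs; lra. Qed.

Lemma clamp_id a b t : a <= t <= b -> clamp a b t = t.
Proof. intros; unfold clamp, Rmax, Rmin; repeat destruct Rle_dec; lra. Qed.

Lemma mvt_closed (f df : R -> R) a b : a < b ->
  (forall t, a < t < b -> is_derive f t (df t)) ->
  (forall t, a <= t <= b -> filterlim f (within (fun s => a <= s <= b) (locally t)) (locally (f t))) ->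
  exists c, a < c < b /\ f b - f a = df c * (b - a).
Proof.
  intros Hab Hd Hc.
  pose (K := ((f b - f a) / (b - a) + 1)).
  pose (dg := fun t => if Rlt_dec a t then if Rlt_dec t b then df t else K else K).
  pose (g := fun t => f (clamp a b t)).
  destruct (MVT_gen g a b dg) as [c [Hc1 Hc2]].
  - rewrite Rmin_left, Rmax_right by lra. intros x Hx.
    apply is_derive_ext_loc with f.
    + assert (He : 0 < Rmin (x - a) (b - x)) by (apply Rmin_pos; lra).
      exists (mkposreal _ He). intros y Hy. simpl in Hy. change (Rabs (y - x) < Rmin (x - a) (b - x)) in Hy.
      unfold g. rewrite clamp_id; auto.
      pose proof (Rmin_l (x - a) (b - x)); pose proof (Rmin_r (x - a) (b - x)).
      apply Rabs_def2 in Hy. lra.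
    + unfold dg. destruct Rlt_dec; [|lra]. destruct Rlt_dec; [|lra]. now apply Hd.
  - intros x _. apply continuity_pt_filterlim. unfold g.
    eapply filterlim_comp with (G := within (fun s => a <= s <= b) (locally (clamp a b x))).
    + intros P [eps HP]. exists eps. intros y Hy. apply HP.
      * change (Rabs (clamp a b y - clamp a b x) < eps).
        eapply Rle_lt_trans; [apply clamp_lip; lra|]. exact Hy.
      * apply clamp_in; lra.
    + apply Hc. apply clamp_in; lra.
  - rewrite Rmin_left, Rmax_right in Hc1 by lra.
    assert (Hga : g a = f a) by (unfold g; rewrite clamp_id; auto; lra).
    assert (Hgb : g b = f b) by (unfold g; rewrite clamp_id; auto; lra).
    rewrite Hga, Hgb in Hc2.
    unfold dg in Hc2. destruct (Rlt_dec a c).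
    + destruct (Rlt_dec c b).
      * exists c; split; [lra|exact Hc2].
      * exfalso. unfold K in Hc2. assert (f b - f a = (f b - f a) + (b - a)).
        { rewrite Hc2 at 1. field. lra. } lra.
    + exfalso. unfold K in Hc2. assert (f b - f a = (f b - f a) + (b - a)).
        { rewrite Hc2 at 1. field. lra. } lra.
Qed.

Lemma within_sub (f : R -> R) (D1 D2 : R -> Prop) t l :
  (forall s, D1 s -> D2 s) ->
  filterlim f (within D2 (locally t)) (locally l) ->
  filterlim f (within D1 (locally t)) (locally l).
Proof. intros Hs H P HP. specialize (H P HP). unfold filtermap, within in *.
  eapply filter_imp; [|exact H]. simpl. intros x Hx Hd. apply Hx, Hs, Hd. Qed.

Lemma q_pos a b : (a, b) <> (0, 0) -> 0 < a * a + b * b.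
Proof. intros H. destruct (Req_dec a 0); destruct (Req_dec b 0); subst; [now elim H|nra|nra|nra]. Qed.

Section Sol.
Variables (D : R -> R -> R) (T : R) (X1 X2 V1 V2 : R -> R).
Hypothesis HDnn : forall a b, (a, b) <> (0, 0) -> 0 <= D a b.
Hypothesis Hsol : is_solution D T X1 X2 V1 V2.

Definition qf t := X1 t * X1 t + X2 t * X2 t.
Definition pf t := X1 t * V1 t + X2 t * V2 t.
Definition uf t := rdot X1 X2 V1 V2 t.

Lemma deriv_q t : -T < t < 0 -> is_derive qf t (2 * pf t).
Proof.
  intros Ht. destruct Hsol as [_ [_ Hd]]. destruct (Hd t Ht) as [d1 [d2 _]].
  eapply is_derive_eq.
  - apply (is_derive_plus (fun t => X1 t * X1 t) (fun t => X2 t * X2 t)).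
    + apply (is_derive_mult X1 X1 t _ _ d1 d1). intros; apply Rmult_comm.
    + apply (is_derive_mult X2 X2 t _ _ d2 d2). intros; apply Rmult_comm.
  - unfold pf, plus, mult; simpl. ring.
Qed.

Lemma deriv_u t : -T < t < 0 -> is_derive uf t (Derive uf t) /\
   (uf t <= 0 -> - / qf t <= Derive uf t).
Proof.
  intros Ht. destruct Hsol as [Hnz [_ Hd]]. destruct (Hd t Ht) as [d1 [d2 [d3 d4]]].
  assert (Hq : 0 < qf t) by (apply q_pos, Hnz; lra).
  assert (Hp : is_derive pf t (V1 t * V1 t + X1 t * (- D (X1 t) (X2 t) * V1 t - X1 t / (norm2 (X1 t) (X2 t)) ^ 3)
     + (V2 t * V2 t + X2 t * (- D (X1 t) (X2 t) * V2 t - X2 t / (norm2 (X1 t) (X2 t)) ^ 3)))).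
  { eapply is_derive_eq.
    - apply (is_derive_plus (fun t => X1 t * V1 t) (fun t => X2 t * V2 t)).
      + apply (is_derive_mult X1 V1 t _ _ d1 d3). intros; apply Rmult_comm.
      + apply (is_derive_mult X2 V2 t _ _ d2 d4). intros; apply Rmult_comm.
    - unfold plus, mult; simpl. ring. }
  assert (Hs : is_derive (fun t => sqrt (qf t)) t (2 * pf t / (2 * sqrt (qf t)))).
  { apply is_derive_sqrt; auto. apply deriv_q; auto. }
  assert (Hspos : 0 < sqrt (qf t)) by (apply sqrt_lt_R0; auto).
  pose proof (is_derive_div pf (fun t => sqrt (qf t)) t _ _ Hp Hs ltac:(lra)) as Hu.
  assert (Hu' : is_derive uf t (Derive uf t)).
  { rewrite (is_derive_unique uf t _ Hu). exact Hu. }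
  split; [exact Hu'|].
  rewrite (is_derive_unique uf t _ Hu).
  intros Hu0.
  unfold uf, rdot in Hu0. fold (pf t) in Hu0. change (norm2 (X1 t) (X2 t)) with (sqrt (qf t)) in *.
  assert (Hp0 : pf t <= 0).
  { destruct (Rle_dec (pf t) 0); auto. exfalso.
    assert (0 < pf t / sqrt (qf t)) by (apply Rdiv_lt_0_compat; lra). lra. }
  assert (HD : 0 <= D (X1 t) (X2 t)) by (apply HDnn, Hnz; lra).
  set (s := sqrt (qf t)) in *.
  assert (Hss : s * s = qf t) by (apply sqrt_sqrt; lra).
  set (d := D (X1 t) (X2 t)) in *.
  unfold pf in *. unfold qf in Hss, Hq.
  set (a1 := X1 t) in *. set (a2 := X2 t) in *. set (b1 := V1 t) in *. set (b2 := V2 t) in *.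
  change (norm2 a1 a2) with s.
  assert (E : ((b1 * b1 + a1 * (- d * b1 - a1 / s ^ 3) + (b2 * b2 + a2 * (- d * b2 - a2 / s ^ 3))) * s -
     (a1 * b1 + a2 * b2) * (2 * (a1 * b1 + a2 * b2) / (2 * s))) / s ^ 2
     = ((b1*b1+b2*b2)*(s*s) - (a1*b1+a2*b2)*(a1*b1+a2*b2)) / (s*s*s) - d * (a1*b1+a2*b2) / s
       - (a1*a1+a2*a2) / (s*s*s*s)).
  { field. lra. }
  rewrite E. rewrite <- Hss.
  replace (s * s / (s * s * s * s)) with (/ (s*s)) by (field; lra).
  replace (qf t) with (s * s) by (rewrite Hss; reflexivity).
  assert (0 <= ((b1*b1+b2*b2)*(s*s) - (a1*b1+a2*b2)*(a1*b1+a2*b2)) / (s*s*s)).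
  { apply Rdiv_le_0_compat; [|apply Rmult_lt_0_compat; [nra|lra]]. rewrite Hss. pose proof (Rle_0_sqr (a1 * b2 - a2 * b1)). unfold Rsqr in *. nra. }
  assert (0 <= - (d * (a1*b1+a2*b2) / s)).
  { replace (- (d * (a1*b1+a2*b2) / s)) with (d * (-(a1*b1+a2*b2)) * / s) by (field; lra). apply Rmult_le_pos; [apply Rmult_le_pos; lra|].
    left; apply Rinv_0_lt_compat; lra. }
  lra.
Qed.
End Sol.

Section Sol2.
Variables (D : R -> R -> R) (T : R) (X1 X2 V1 V2 : R -> R).
Hypothesis HDnn : forall a b, (a, b) <> (0, 0) -> 0 <= D a b.
Hypothesis Hsol : is_solution D T X1 X2 V1 V2.
Let I := fun s => -T <= s <= 0.

Lemma cont_q t : -T <= t <= 0 -> filterlim (qf X1 X2) (within I (locally t)) (locally (qf X1 X2 t)).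
Proof.
  intros Ht. destruct Hsol as [_ [Hc _]]. destruct (Hc t Ht) as [c1 [c2 _]].
  unfold qf. apply cw_plus; [apply _| |]; apply cw_mult; auto; apply _.
Qed.

Lemma cont_u t : -T <= t <= 0 -> filterlim (uf X1 X2 V1 V2) (within I (locally t)) (locally (uf X1 X2 V1 V2 t)).
Proof.
  intros Ht. destruct Hsol as [Hnz [Hc _]]. destruct (Hc t Ht) as [c1 [c2 [c3 c4]]].
  assert (Hq : 0 < qf X1 X2 t) by (apply q_pos, Hnz; lra).
  unfold uf, rdot. unfold Rdiv. apply cw_mult; [apply _| |].
  - apply cw_plus; [apply _| |]; apply cw_mult; auto; apply _.
  - apply (cw_comp _ (qf X1 X2) (fun y => / sqrt y) _ (cont_q t Ht)).
    apply continuous_Rinv_comp. apply continuous_sqrt.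
    apply Rgt_not_eq, sqrt_lt_R0; auto.
Qed.
End Sol2.

Section Sol3.
Variables (D : R -> R -> R) (T : R) (X1 X2 V1 V2 : R -> R).
Hypothesis HDnn : forall a b, (a, b) <> (0, 0) -> 0 <= D a b.
Hypothesis Hsol : is_solution D T X1 X2 V1 V2.

Lemma key rB c : 0 < rB -> 0 < T -> norm2 (X1 0) (X2 0) = rB ->
  uf X1 X2 V1 V2 0 + T / (rB * rB) = c -> c < 0 ->
  forall t, -T <= t <= 0 -> uf X1 X2 V1 V2 t < c / 2.
Proof.
  intros HrB HT Hr0 Hc Hcneg t Ht.
  set (u := uf X1 X2 V1 V2) in *. set (q := qf X1 X2) in *.
  destruct (Rlt_or_le (u t) (c/2)) as [|Hge]; [assumption|exfalso].
  assert (Hq0 : q 0 = rB * rB).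
  { rewrite <- Hr0. unfold norm2. rewrite sqrt_sqrt; [reflexivity|].
    destruct Hsol as [Hnz _]. left. apply q_pos, Hnz; lra. }
  pose (E := fun s => -T <= s <= 0 /\ c / 2 <= u s).
  destruct (completeness E) as [m [Hub Hlub]].
  { exists 0. intros s [Hs _]. lra. }
  { exists t. split; auto. }
  assert (Htm : t <= m) by (apply Hub; split; auto).
  assert (Hm0 : m <= 0) by (apply Hlub; intros s [Hs _]; lra).
  assert (HmI : -T <= m <= 0) by lra.
  assert (Hum : c / 2 <= u m).
  { destruct (Rlt_or_le (u m) (c/2)) as [Hlt|]; [exfalso|assumption].
    pose proof (cont_u D T X1 X2 V1 V2 Hsol m HmI) as Hcm.
    assert (HP : locally (u m) (fun y => y < c / 2)).
    { assert (He : 0 < c / 2 - u m) by lra. exists (mkposreal _ He). intros y Hy.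
      change (Rabs (y - u m) < c / 2 - u m) in Hy. apply Rabs_def2 in Hy. lra. }
    specialize (Hcm _ HP). destruct Hcm as [eps Heps].
    assert (m <= m - eps / 2).
    { apply Hlub. intros s [HsI Hs]. destruct (Rle_or_lt s (m - eps/2)) as [|Hlt2]; [assumption|exfalso].
      assert (s <= m) by (apply Hub; split; auto).
      assert (u s < c / 2).
      { apply Heps; [|exact HsI]. change (Rabs (s - m) < eps). apply Rabs_def1; pose proof (cond_pos eps); lra. }
      lra. }
    pose proof (cond_pos eps). lra. }
  assert (Hpos : 0 < T / (rB * rB)) by (apply Rdiv_lt_0_compat; nra).
  assert (Hu0 : u 0 < c / 2) by lra.
  assert (Hmlt : m < 0) by (destruct (Req_dec m 0); [subst; lra|lra]).
  assert (Hafter : forall s, m < s <= 0 -> u s < c / 2).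
  { intros s Hs. destruct (Rlt_or_le (u s) (c/2)); [assumption|].
    assert (s <= m) by (apply Hub; split; [lra|auto]). lra. }
  assert (Hqge : forall s, m < s < 0 -> rB * rB <= q s).
  { intros s Hs.
    destruct (mvt_closed q (fun y => 2 * pf X1 X2 V1 V2 y) s 0) as [e [He Heq]].
    - lra.
    - intros y Hy. apply (deriv_q D T X1 X2 V1 V2 Hsol). lra.
    - intros y Hy. eapply within_sub; [|apply (cont_q D T X1 X2 V1 V2 Hsol); lra].
      intros z Hz; simpl; lra.
    - assert (Hpe : pf X1 X2 V1 V2 e < 0).
      { assert (Hue : u e < 0) by (pose proof (Hafter e ltac:(lra)); lra).
        destruct Hsol as [Hnz _].
        assert (Hqe : 0 < q e) by (apply q_pos, Hnz; lra).
        assert (Hse : 0 < sqrt (q e)) by (apply sqrt_lt_R0; auto).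
        unfold u, uf, rdot in Hue. change (norm2 (X1 e) (X2 e)) with (sqrt (q e)) in Hue.
        fold (pf X1 X2 V1 V2 e) in Hue.
        destruct (Rlt_or_le (pf X1 X2 V1 V2 e) 0); auto.
        assert (0 <= pf X1 X2 V1 V2 e / sqrt (q e)) by (apply Rdiv_le_0_compat; lra). lra. }
      rewrite <- Hq0. nra. }
  destruct (mvt_closed u (Derive u) m 0) as [e [He Heq]].
  - lra.
  - intros y Hy. apply (deriv_u D T X1 X2 V1 V2 HDnn Hsol). lra.
  - intros y Hy. eapply within_sub; [|apply (cont_u D T X1 X2 V1 V2 Hsol); lra].
    intros z Hz; simpl; lra.
  - assert (Hd : - / q e <= Derive u e).
    { apply (deriv_u D T X1 X2 V1 V2 HDnn Hsol). lra. pose proof (Hafter e ltac:(lra)). change (u e <= 0). lra. }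
    assert (Hqe : rB * rB <= q e) by (apply Hqge; lra).
    assert (Hinv : / q e <= / (rB * rB)) by (apply Rinv_le_contravar; nra).
    assert (Hb : Derive u e * (0 - m) >= - / (rB * rB) * T).
    { assert (0 < / (rB * rB)) by (apply Rinv_0_lt_compat; nra). nra. }
    unfold Rdiv in Hc. lra.
Qed.
End Sol3.

Theorem lemma7p1 (D : R -> R -> R)
  (HDnn : forall a b, (a, b) <> (0, 0) -> 0 <= D a b)
  (HDbd : exists K, forall a b, (a, b) <> (0, 0) -> Rabs (D a b) <= K)
  (HDC1 : C1_punctured D)
  (rB T : R) (HrB : 0 < rB) (HT : 0 < T)
  (x1 x2 v1 v2 : nat -> R -> R)
  (Hsol : forall n, is_solution D T (x1 n) (x2 n) (v1 n) (v2 n))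
  (Hr0 : forall n, norm2 (x1 n 0) (x2 n 0) = rB)
  (Hlim : is_lim_seq (fun n => rdot (x1 n) (x2 n) (v1 n) (v2 n) 0) m_infty) :
  forall M : R, exists N : nat, forall n : nat, (N <= n)%nat ->
    forall t : R, -T <= t <= 0 -> rdot (x1 n) (x2 n) (v1 n) (v2 n) t <= - M.
Proof.
  intros M.
  apply is_lim_seq_spec in Hlim.
  destruct (Hlim (-2 * Rabs M - 1 - T / (rB * rB))) as [N HN].
  exists N. intros n Hn t Ht.
  specialize (HN n Hn). simpl in HN.
  pose proof (key D T (x1 n) (x2 n) (v1 n) (v2 n) HDnn (Hsol n) rB
     (rdot (x1 n) (x2 n) (v1 n) (v2 n) 0 + T / (rB * rB)) HrB HT (Hr0 n) eq_refl
     ltac:(pose proof (Rabs_pos M); lra) t Ht) as Hk.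
  unfold uf in Hk.
  pose proof (Rle_abs M) as HM. set (k := T / (rB * rB)) in *. set (a := rdot (x1 n) (x2 n) (v1 n) (v2 n) 0) in *. set (b := rdot (x1 n) (x2 n) (v1 n) (v2 n) t) in *. clearbody k a b. lra.
Qed.
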